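(* Let $\mathcal{H}$ be a separable Hilbert space with orthonormal basis $(e_i)_{i\in\mathbb{N}}$, $G$ a finite collection of pairwise disjoint finite groups $g\subset\mathbb{N}$, $K\ge2$ an integer, and $\Sigma=\Sigma_K$ the $K$-group-sparse model. Then uniform recovery of $\Sigma_K$ with the regularizer $\|\cdot\|_\Sigma$ is impossible: the descent set $\mathcal{T}_{\|\cdot\|_\Sigma}(\Sigma)$ equals $\mathcal{E}(\Sigma)$, so that for every linear operator $M$ whose null space contains a nonzero element of $\mathcal{E}(\Sigma)$ there exists $x_0\in\Sigma_K$ which is not the unique minimizer of $\min_{x}\|x\|_\Sigma$ subject to $Mx=Mx_0$.
   Context: $x_g=\sum_{i\in g}\langle x,e_i\rangle e_i$; the group support of $x$ is the smallest $H\subset G$ with $\sum_{g\in H}x_g=x$; $\Sigma_K=\{x:|\text{group support}(x)|\le K\}$. $\|\cdot\|_\Sigma$ is the atomic norm with atoms $\Sigma\cap S(1)$ ($S(1)$ the unit sphere): $\|x\|_\Sigma=\inf\{t\ge0:x\in t\cdot\overline{\mathrm{conv}}(\Sigma\cap S(1))\}$, $+\infty$ if none; $\mathcal{E}(\Sigma)=\{x:\|x\|_\Sigma<\infty\}=\mathbb{R}_+\cdot\overline{\mathrm{conv}}(\Sigma\cap S(1))$. Descent set: $\mathcal{T}_{f}(\Sigma)=\bigcup_{x\in\Sigma}\{z:f(x+z)\le f(x)\}$. *)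

(* Defs.v *)
From HB Require Import structures.
From mathcomp Require Import all_boot all_order all_algebra finmap.
From mathcomp Require Import all_classical all_reals all_analysis.
Set Implicit Arguments. Unset Strict Implicit. Unset Printing Implicit Defensive.
Import Order.TTheory GRing.Theory Num.Theory.
Import numFieldNormedType.Exports.
Local Open Scope classical_set_scope.
Local Open Scope ring_scope.
Local Open Scope fset_scope.

Section GroupSparse.
Variables (R : realType) (V : normedModType R).
Variables (ip : V -> V -> R) (e : nat -> V).

Definition gproj (g : {fset nat}) (x : V) : V :=
  \sum_(i <- g) ip x (e i) *: e i.

Definition is_group_support (G H : {fset {fset nat}}) (x : V) : Prop :=
  [/\ H `<=` G, \sum_(g <- H) gproj g x = x &
      forall H', H' `<=` G -> \sum_(g <- H') gproj g x = x -> H `<=` H'].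

Definition Sigma_K (G : {fset {fset nat}}) (K : nat) : set V :=
  [set x | exists H, is_group_support G H x /\ (#|` H| <= K)%N].

End GroupSparse.

Section Atomic.
Variables (R : realType) (V : normedModType R).

Definition unit_sphere : set V := [set x | `|x| = 1].

Definition conv_hull (A : set V) : set V :=
  [set x | exists n (w : 'I_n -> R) (a : 'I_n -> V),
     [/\ forall i, 0 <= w i, \sum_(i < n) w i = 1, forall i, A (a i)
       & x = \sum_(i < n) w i *: a i]].

Definition scale_set (t : R) (A : set V) : set V := [set t *: a | a in A].

(* atomic norm with atoms Sigma ∩ S(1); +oo if no t works *)
Definition atomic_norm (Sigma : set V) (x : V) : \bar R :=
  ereal_inf [set t%:E | t in
    [set t : R | 0 <= t /\ scale_set t (closure (conv_hull (Sigma `&` unit_sphere))) x]].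

Definition cE (Sigma : set V) : set V :=
  [set x | (atomic_norm Sigma x < +oo)%E].

Definition descent_set (f : V -> \bar R) (Sigma : set V) : set V :=
  \bigcup_(x in Sigma) [set z | (f (x + z)%R <= f x)%E].

Definition unique_minimizer (W : lmodType R) (f : V -> \bar R) (M : V -> W) (x0 : V) : Prop :=
  forall x, M x = M x0 -> x <> x0 -> (f x0 < f x)%E.

End Atomic.

(* Main.v *)
Require Import Defs.
From HB Require Import structures.
From mathcomp Require Import all_boot all_order all_algebra finmap.
From mathcomp Require Import all_classical all_reals all_analysis.
From mathcomp Require Import ring lra.
Import Order.TTheory GRing.Theory Num.Theory.
Import numFieldNormedType.Exports.
Local Open Scope classical_set_scope.
Local Open Scope ring_scope.

Section Main.
Variables (R : realType) (V : normedModType R).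
Variables (ip : V -> V -> R) (e : nat -> V).
Hypothesis ip_sym : forall x y, ip x y = ip y x.
Hypothesis ip_lin : forall (a : R) x y z, ip (a *: x + y) z = a * ip x z + ip y z.
Hypothesis ip_norm : forall x, ip x x = `|x| ^+ 2.
Hypothesis e_orthonormal : forall i j, ip (e i) (e j) = (i == j)%:R.
Local Notation unit_sphere := (@unit_sphere R V).

Lemma ipDl x y z : ip (x + y) z = ip x z + ip y z.
Proof. by have := ip_lin 1 x y z; rewrite scale1r mul1r. Qed.
Lemma ip0l z : ip 0 z = 0.
Proof. have h := ipDl 0 0 z; rewrite addr0 in h. by apply: (addrI (ip 0 z)); rewrite addr0 -h. Qed.
Lemma ipZl a x z : ip (a *: x) z = a * ip x z.
Proof. by have := ip_lin a x 0 z; rewrite addr0 ip0l addr0. Qed.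
Lemma ipDr x y z : ip z (x + y) = ip z x + ip z y.
Proof. by rewrite ip_sym ipDl !(ip_sym z). Qed.
Lemma ipZr a x z : ip z (a *: x) = a * ip z x.
Proof. by rewrite ip_sym ipZl ip_sym. Qed.
Lemma ip0r z : ip z 0 = 0.
Proof. by rewrite ip_sym ip0l. Qed.
Lemma ipNl x z : ip (- x) z = - ip x z.
Proof. by rewrite -scaleN1r ipZl mulN1r. Qed.
Lemma ipNr x z : ip z (- x) = - ip z x.
Proof. by rewrite ip_sym ipNl ip_sym. Qed.
Lemma ip_suml (I : Type) (s : seq I) (F : I -> V) z :
  ip (\sum_(i <- s) F i) z = \sum_(i <- s) ip (F i) z.
Proof. by elim: s => [|a s IH]; rewrite ?big_nil ?ip0l // !big_cons ipDl IH. Qed.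
Lemma ip_sumr (I : Type) (s : seq I) (F : I -> V) z :
  ip z (\sum_(i <- s) F i) = \sum_(i <- s) ip z (F i).
Proof. by rewrite ip_sym ip_suml; apply: eq_bigr => i _; rewrite ip_sym. Qed.

Let gp := gproj ip e.

Lemma gprojD g x y : gp g (x + y) = gp g x + gp g y.
Proof. by rewrite /gp /gproj -big_split; apply: eq_bigr => i _; rewrite ipDl scalerDl. Qed.
Lemma gprojZ g a x : gp g (a *: x) = a *: gp g x.
Proof. by rewrite /gp /gproj scaler_sumr; apply: eq_bigr => i _; rewrite ipZl scalerA. Qed.
Lemma gproj0 g : gp g 0 = 0.
Proof. by rewrite /gp /gproj big1 // => i _; rewrite ip0l scale0r. Qed.
Lemma gprojN g x : gp g (- x) = - gp g x.
Proof. by rewrite -scaleN1r gprojZ scaleN1r. Qed.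
Lemma gprojB g x y : gp g (x - y) = gp g x - gp g y.
Proof. by rewrite gprojD gprojN. Qed.
Lemma gproj_sum g (I : Type) (s : seq I) (F : I -> V) :
  gp g (\sum_(i <- s) F i) = \sum_(i <- s) gp g (F i).
Proof. by elim: s => [|a s IH]; rewrite ?big_nil ?gproj0 // !big_cons gprojD IH. Qed.

Lemma ip_gproj_e g x j : ip (gp g x) (e j) = if j \in g then ip x (e j) else 0.
Proof.
rewrite /gp /gproj ip_suml.
under eq_bigr do rewrite ipZl e_orthonormal.
case: ifP => jg.
  rewrite (bigD1_seq j) //= ?eqxx ?mulr1; last exact: fset_uniq.
  by rewrite big1 ?addr0 // => i /negbTE ->; rewrite mulr0.
by rewrite big1_seq // => i /= ig; case: eqP => [ij|]; [by rewrite -ij ig in jg|rewrite mulr0].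
Qed.

Lemma gproj_gproj g h x :
  gp g (gp h x) = \sum_(i <- g) (if i \in h then ip x (e i) else 0) *: e i.
Proof. by rewrite /gproj; apply: eq_bigr => i _; rewrite ip_gproj_e. Qed.

Lemma gproj_disj g h x : [disjoint g & h]%fset -> gp g (gp h x) = 0.
Proof.
move/fdisjointP => D; rewrite gproj_gproj big1_seq // => i /= ig.
by rewrite (negbTE (D i ig)) scale0r.
Qed.

Lemma gproj_id g x : gp g (gp g x) = gp g x.
Proof. by rewrite gproj_gproj /gp /gproj; apply: eq_big_seq => i ->. Qed.

Lemma gproj_e g j : gp g (e j) = if j \in g then e j else 0.
Proof.
rewrite /gp /gproj; under eq_bigr do rewrite e_orthonormal.
case: ifP => jg.
  rewrite (bigD1_seq j) //= ?eqxx ?scale1r; last exact: fset_uniq.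
  by rewrite big1 ?addr0 // => i /negbTE; rewrite eq_sym => ->; rewrite scale0r.
by rewrite big1_seq // => i /= ig; case: eqP => [ij|]; [by rewrite ij ig in jg|rewrite scale0r].
Qed.

Lemma ip_gproj_orth g h x y : [disjoint g & h]%fset -> ip (gp g x) (gp h y) = 0.
Proof.
move/fdisjointP => D; rewrite /gp /gproj ip_sumr big1_seq // => i /= ih.
rewrite ipZr -/gp ip_gproj_e; case: ifP => ig; last by rewrite mulr0.
by have := D i ig; rewrite ih.
Qed.

Lemma norm_orth a b : ip a b = 0 -> `|a + b| ^+ 2 = `|a| ^+ 2 + `|b| ^+ 2.
Proof.
move=> ab; rewrite -!ip_norm ipDl !ipDr ab (ip_sym b a) ab.
by rewrite addr0 add0r.
Qed.



Implicit Types (Sigma : set V).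

Lemma closed_ball1 : closed [set y : V | `|y| <= 1].
Proof.
have -> : [set y : V | `|y| <= 1] = (fun y : V => `|y|) @^-1` [set r : R | r <= 1] by [].
apply: preimage_closed; last exact: closed_le.
by move=> y _; exact: norm_continuous.
Qed.

Lemma conv_ball Sigma : conv_hull (Sigma `&` unit_sphere) `<=` [set y : V | `|y| <= 1].
Proof.
move=> x [n [w [a [w0 w1 aS ->]]]] /=.
apply: (le_trans (ler_norm_sum _ _ _)); rewrite -w1 ler_sum // => i _.
by rewrite normrZ (aS i).2 mulr1 ger0_norm.
Qed.

Lemma C_ball Sigma : closure (conv_hull (Sigma `&` unit_sphere)) `<=` [set y : V | `|y| <= 1].
Proof.
rewrite [X in _ `<=` X](closure_id _).1; last exact: closed_ball1.
exact/closureS/conv_ball.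
Qed.

Lemma atomic_lb Sigma x : (`|x|%:E <= atomic_norm Sigma x)%E.
Proof.
apply: le_ereal_inf_tmp => _ [t [t0 [c cC <-]] <-].
rewrite lee_fin normrZ ger0_norm //.
by rewrite -[X in _ <= X]mulr1 ler_wpM2l // (@C_ball _ _ cC).
Qed.

Lemma atomic_ub Sigma x t c : 0 <= t -> closure (conv_hull (Sigma `&` unit_sphere)) c ->
  x = t *: c -> (atomic_norm Sigma x <= t%:E)%E.
Proof.
move=> t0 cC ->; apply: ge_ereal_inf; exists t%:E => //.
by exists t => //; split => //; exists c.
Qed.

Lemma conv_seq (I : eqType) (s : seq I) (W : I -> R) (B : I -> V) (A : set V) :
  (forall i, 0 <= W i) -> \sum_(i <- s) W i = 1 -> (forall i, A (B i)) ->
  conv_hull A (\sum_(i <- s) W i *: B i).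
Proof.
case: s => [|x0 s] W0 W1 BA; first by rewrite big_nil in W1; move/eqP: W1; rewrite eq_sym oner_eq0.
exists (size (x0 :: s)), (fun i : 'I_(size (x0 :: s)) => W (nth x0 (x0 :: s) i)),
  (fun i : 'I_(size (x0 :: s)) => B (nth x0 (x0 :: s) i)); split => //.
  by rewrite -W1 (big_nth x0) big_mkord.
by rewrite (big_nth x0) big_mkord.
Qed.

Lemma atomic_sum Sigma a0 (I : eqType) (s : seq I) (v : I -> V) :
  (Sigma `&` unit_sphere) a0 ->
  (forall i, v i != 0 -> (Sigma `&` unit_sphere) (`|v i|^-1 *: v i)) ->
  (atomic_norm Sigma (\sum_(i <- s) v i)%R <= ((\sum_(i <- s) `|v i|)%R)%:E)%E.
Proof.
move=> a0S vS.
have a0C : closure (conv_hull (Sigma `&` unit_sphere)) a0.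
  apply: subset_closure.
  have H := @conv_seq unit [:: tt] (fun=> 1) (fun=> a0) (Sigma `&` unit_sphere) (fun=> ler01).
  rewrite !big_cons !big_nil !addr0 scale1r in H; exact: H.
set t := \sum_(i <- s) `|v i|.
have t0 : 0 <= t by apply: sumr_ge0 => i _.
have [tz|tnz] := eqVneq t 0.
  rewrite tz; apply: (@atomic_ub Sigma _ _ a0) => //.
  rewrite scale0r; apply/eqP; rewrite -normr_le0 -tz; exact: ler_norm_sum.
pose B i := if v i == 0 then a0 else `|v i|^-1 *: v i.
apply: (@atomic_ub Sigma _ _ (\sum_(i <- s) (`|v i| / t) *: B i)) => //.
  apply: subset_closure; apply: conv_seq.
  - by move=> i; rewrite divr_ge0.
  - by rewrite -mulr_suml mulfV.
  - by move=> i; rewrite /B; case: eqP => [_|/eqP]; [|apply: vS].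
rewrite scaler_sumr; apply: eq_bigr => i _; rewrite scalerA mulrCA mulfV // mulr1 /B.
case: eqP => [->|/eqP vi0]; first by rewrite normr0 scale0r.
by rewrite scalerA mulfV ?scale1r // normr_eq0.
Qed.


Lemma ip_polar x v : ip x v = (`|x + v| ^+ 2 - `|x - v| ^+ 2) / 4.
Proof.
have h1 : `|x + v| ^+ 2 = ip x x + ip v v + 2 * ip x v.
  rewrite -ip_norm ipDl !ipDr (ip_sym v x); ring.
have h2 : `|x - v| ^+ 2 = ip x x + ip v v - 2 * ip x v.
  rewrite -ip_norm ipDl !ipDr !ipNl !ipNr (ip_sym v x).
  ring.
rewrite h1 h2; field; by rewrite ?pnatr_eq0.
Qed.

Lemma cont_sum (T : topologicalType) (I : Type) (s : seq I) (F : I -> T -> V) :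
  (forall i, continuous (F i)) -> continuous (fun y => \sum_(i <- s) F i y).
Proof.
move=> Fc; elim: s => [|a s IH].
  by under eq_fun do rewrite big_nil; exact: cst_continuous.
under eq_fun do rewrite big_cons.
by move=> y; apply: continuousD; [exact: Fc|exact: IH].
Qed.

Lemma ip_cont v : continuous (fun x => ip x v).
Proof.
have c1 : continuous (fun y => `|y + v|).
  move=> y; apply: (continuous_comp (f := fun y => y + v)); last exact: norm_continuous.
  by apply: continuousD; [exact: cvg_id|exact: cst_continuous].
have c2 : continuous (fun y => `|y - v|).
  move=> y; apply: (continuous_comp (f := fun y => y - v)); last exact: norm_continuous.
  by apply: continuousB; [exact: cvg_id|exact: cst_continuous].
under eq_fun do rewrite ip_polar !expr2.
move=> x.
have h := continuousM (continuousB (continuousM (c1 x) (c1 x)) (continuousM (c2 x) (c2 x)))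
  (@cst_continuous _ _ (4^-1 : R) x).
exact: h.
Qed.
Variables (G : {fset {fset nat}}) (K : nat).
Hypothesis G_disj : forall g1 g2, g1 \in G -> g2 \in G -> g1 != g2 ->
                          [disjoint g1 & g2]%fset.
Hypothesis HK : (2 <= K)%N.

Let Sig := Sigma_K ip e G K.
Let P y := \sum_(g <- G) gp g y.
Let S := [set y | P y = y].

Lemma gpG g h y : g \in G -> h \in G -> gp g (gp h y) = if g == h then gp h y else 0.
Proof.
move=> gG hG; case: eqP => [->|/eqP gh]; first exact: gproj_id.
exact/gproj_disj/G_disj.
Qed.

Lemma P_gp h y : h \in G -> P (gp h y) = gp h y.
Proof.
move=> hG; rewrite /P (bigD1_seq h) ?fset_uniq //= gproj_id.
by rewrite big1_seq ?addr0 // => g /andP[gh gG]; rewrite gpG // (negbTE gh).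
Qed.

Lemma PD x y : P (x + y) = P x + P y.
Proof. by rewrite /P -big_split; apply: eq_bigr => g _; rewrite gprojD. Qed.
Lemma PZ a x : P (a *: x) = a *: P x.
Proof. by rewrite /P scaler_sumr; apply: eq_bigr => g _; rewrite gprojZ. Qed.
Lemma P0 : P 0 = 0.
Proof. by rewrite /P big1 // => g _; rewrite gproj0. Qed.
Lemma P_sum (I : Type) (s : seq I) (F : I -> V) :
  P (\sum_(i <- s) F i) = \sum_(i <- s) P (F i).
Proof. by elim: s => [|a s IH]; rewrite ?big_nil ?P0 // !big_cons PD IH. Qed.

Lemma gp_cont g : continuous (gp g).
Proof.
rewrite /gp /gproj; apply: cont_sum => i y.
by apply: continuousZr_tmp; exact: ip_cont.
Qed.

Lemma P_cont : continuous P.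
Proof. by apply: cont_sum => g; exact: gp_cont. Qed.

Lemma S_closed : closed S.
Proof.
have -> : S = (fun y => `|P y - y|) @^-1` [set r : R | r <= 0].
  apply/seteqP; split => y /=; rewrite /S /=.
    by move=> ->; rewrite subrr normr0.
  by rewrite normr_le0 subr_eq0 => /eqP.
apply: preimage_closed; last exact: closed_le.
move=> y _; apply: (continuous_comp (f := fun y => P y - y)); last exact: norm_continuous.
by apply: continuousB; [exact: P_cont|exact: cvg_id].
Qed.

Lemma sig_mem (H : {fset {fset nat}}) y : (H `<=` G)%fset -> (#|` H| <= K)%N ->
  \sum_(h <- H) gp h y = y -> (forall h, h \in H -> gp h y != 0) -> Sig y.
Proof.
move=> HG HKc Hs Hnz; exists H; split => //; split => // H' H'G H's.
apply/fsubsetP => g gH; apply/negPn/negP => gH'.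
have gG : g \in G by apply: (fsubsetP HG).
have := Hnz g gH; rewrite -H's gproj_sum big1_seq ?eqxx // => h /= hH'.
rewrite gpG //; last exact: (fsubsetP H'G).
by case: eqP => // gh; rewrite gh hH' in gH'.
Qed.

Lemma sig_mem_gen n (H : {fset {fset nat}}) y : (#|` H| <= n)%N -> (H `<=` G)%fset -> (#|` H| <= K)%N ->
  \sum_(h <- H) gp h y = y -> Sig y.
Proof.
elim: n H => [|n IH] H Hn HG HKc Hs;
  (have [[h hH hz]|none] := pselect (exists2 h, h \in H & gp h y = 0); last first).
- by apply: (@sig_mem H y HG HKc Hs) => h hH; apply/eqP => hz; apply: none; exists h.
- by move: Hn; rewrite (cardfsD1 h) hH.
- by apply: (@sig_mem H y HG HKc Hs) => h hH; apply/eqP => hz; apply: none; exists h.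
apply: (IH (H `\ h)%fset).
- by move: Hn; rewrite (cardfsD1 h) hH.
- exact: fsubset_trans (fsubD1set _ _) HG.
- exact: leq_trans (fsubset_leq_card (fsubD1set _ _)) HKc.
- by rewrite -[RHS]Hs (big_fsetD1 _ hH) /= hz add0r.
Qed.

Lemma Sig_S : Sig `<=` S.
Proof.
move=> y [H [[HG Hs _] _]]; rewrite /S /= -[in LHS]Hs P_sum -[RHS]Hs.
by apply: eq_big_seq => h hH; rewrite P_gp //; apply: (fsubsetP HG).
Qed.

Lemma conv_S : conv_hull (Sig `&` unit_sphere) `<=` S.
Proof.
move=> x [n [w [a [_ _ aS ->]]]]; rewrite /S /= P_sum.
apply: eq_bigr => i _; rewrite PZ; congr (_ *: _); exact: Sig_S (aS i).1.
Qed.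

Lemma C_S : closure (conv_hull (Sig `&` unit_sphere)) `<=` S.
Proof.
rewrite [X in _ `<=` X](closure_id _).1; last exact: S_closed.
exact/closureS/conv_S.
Qed.

Lemma cE_S : cE Sig `<=` S.
Proof.
move=> x; rewrite /cE /=; apply: contraPP => nS; rewrite /atomic_norm.
suff -> : [set t%:E | t in [set t : R | 0 <= t /\
   scale_set t (closure (conv_hull (Sig `&` unit_sphere))) x]] = set0.
  by rewrite ereal_inf0 ltxx.
apply/seteqP; split => // u [t [t0 [c cC xc]] _]; apply: nS; rewrite -xc.
by rewrite /S /= PZ (@C_S c cC).
Qed.

Hypothesis G_nontriv : exists2 g, g \in G & g != fset0.

Lemma e_norm i : `|e i| = 1.
Proof.
apply/eqP; rewrite -sqrp_eq1 // -ip_norm e_orthonormal eqxx //.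
Qed.

Lemma unitN v : v != 0 -> unit_sphere (`|v|^-1 *: v).
Proof.
move=> v0; rewrite /unit_sphere /= normrZ normfV normr_id mulVf //.
by rewrite normr_eq0.
Qed.

Lemma one_atom g y : g \in G -> gp g y = y -> Sig y.
Proof.
move=> gG gy; apply: (@sig_mem_gen 1 [fset g]%fset y).
- by rewrite cardfs1.
- by rewrite fsub1set.
- by rewrite cardfs1 (leq_trans _ HK).
- by rewrite big_seq_fset1.
Qed.

Lemma two_atom g h y : g \in G -> h \in G -> g != h -> gp g y + gp h y = y -> Sig y.
Proof.
move=> gG hG gh gy; apply: (@sig_mem_gen 2 (g |` [fset h])%fset y).
- by rewrite cardfsU1 cardfs1; case: (g \notin _).
- by apply/fsubsetP => k; rewrite !inE => /orP[] /eqP ->.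
- by rewrite cardfsU1 cardfs1 (leq_trans _ HK) //; case: (g \notin _).
- by rewrite big_fsetU1 ?inE //= big_seq_fset1.
Qed.

Lemma Sig0 : Sig 0.
Proof.
by apply: (@sig_mem_gen 0 fset0 0); rewrite ?cardfs0 ?fsub0set ?big_seq_fset0.
Qed.

Lemma a0_atom : exists a0, (Sig `&` unit_sphere) a0.
Proof.
case: G_nontriv => g gG /fset0Pn [i ig]; exists (e i); split; last exact: e_norm.
by apply: (@one_atom _ _ gG); rewrite gproj_e ig.
Qed.

Lemma S_cE : S `<=` cE Sig.
Proof.
move=> y Sy; case: a0_atom => a0 a0S.
pose v g := if g \in G then gp g y else 0.
have -> : y = \sum_(g <- G) v g.
  by rewrite -[LHS]Sy /P; apply: eq_big_seq => g gG; rewrite /v gG.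
rewrite /cE /=; apply: le_lt_trans (@atomic_sum Sig a0 _ G v a0S _) (ltry _).
move=> g; rewrite /v; case: ifP => gG; last by rewrite eqxx.
move=> v0; split; last exact: unitN.
by apply: (@one_atom _ _ gG); rewrite gprojZ gproj_id.
Qed.

Lemma PB x y : P (x - y) = P x - P y.
Proof. by rewrite PD -scaleN1r PZ scaleN1r. Qed.

Lemma descent_sub : descent_set (atomic_norm Sig) Sig `<=` cE Sig.
Proof.
move=> z [x xS hz]; apply: S_cE.
have xS' := @Sig_S x xS.
have xz : S (x + z).
  apply: cE_S; rewrite /cE /=; apply: le_lt_trans hz _; exact: (@S_cE x xS').
have : P (- x + (x + z)) = - x + (x + z).
  by rewrite PD xz -scaleN1r PZ xS'.
by rewrite addKr.
Qed.

Lemma cE_sub : cE Sig `<=` descent_set (atomic_norm Sig) Sig.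
Proof.
move=> z zE; have zS : P z = z := @cE_S z zE.
have [->|z0n] := eqVneq z 0.
  by exists 0; [exact: Sig0|rewrite /= addr0].
have [[g0 g0G [i0 i0g c0]] | none] := pselect (exists2 g0, g0 \in G &
    exists2 i0, i0 \in g0 & ip z (e i0) != 0); last first.
  exfalso; move/eqP: z0n; apply; rewrite -zS /P big1_seq // => g /= gG.
  rewrite /gp /gproj big1_seq // => i /= ig.
  case: (eqVneq (ip z (e i)) 0) => [->|nz]; first by rewrite scale0r.
  by exfalso; apply: none; exists g => //; exists i.
case: a0_atom => a0 a0S.
set c := ip z (e i0).
set z0 := gp g0 z.
set u := (`|c| / c) *: e i0.
pose lam g := `|gp g z|.
set L := \sum_(g <- G | g != g0) lam g.
set k := L / `|c| + 1.
set m := (k - k^-1) / 2.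
set kap := (k + k^-1) / 2.
set t := L * m.
set x := - (z0 + t *: u).
pose v g := if (g \in G) && (g != g0) then (lam g * m) *: (- u) + gp g z else 0.
have cn : 0 < `|c| by rewrite normr_gt0.
have L0 : 0 <= L by apply: sumr_ge0 => g _; exact: normr_ge0.
have k1 : 1 <= k by rewrite /k lerDr divr_ge0 // ltW.
have kpos : 0 < k by apply: lt_le_trans ltr01 k1.
have k0 : k != 0 by rewrite gt_eqF.
have kap0 : 0 <= kap by rewrite /kap divr_ge0 // addr_ge0 // ?invr_ge0 ltW.
have i0n : forall g, g \in G -> g != g0 -> i0 \notin g.
  move=> g gG gg0; have gg0' : g0 != g by rewrite eq_sym.
  have /fdisjointP D := G_disj _ _ g0G gG gg0'.
  exact: D.
have Fu1 : gp g0 u = u by rewrite gprojZ gproj_e i0g.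
have Fu2 : forall g, g \in G -> g != g0 -> gp g u = 0.
  by move=> g gG gg0; rewrite gprojZ gproj_e (negbTE (i0n g gG gg0)) scaler0.
have Fu3 : ip z0 u = `|c| by rewrite ipZr ip_gproj_e i0g mulfVK.
have Fu4 : `|u| = 1.
  by rewrite normrZ e_norm mulr1 normrM normfV normr_id mulfV // normr_eq0.
have Fu5 : ip u u = 1 by rewrite ip_norm Fu4 expr1n.
have Fu6 : forall g, g \in G -> g != g0 -> ip u (gp g z) = 0.
  move=> g gG gg0; rewrite ip_sym ipZr ip_gproj_e (negbTE (i0n g gG gg0)).
  by rewrite mulr0.
clearbody u.
have Pz : z = z0 + \sum_(g <- G | g != g0) gp g z.
  by rewrite -[LHS]zS /P (bigD1_seq g0) ?fset_uniq.
have sum_v : x + z = \sum_(g <- G) v g.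
  have -> : \sum_(g <- G) v g = \sum_(g <- G) (if g != g0 then
      (lam g * m) *: (- u) + gp g z else 0).
    by apply: eq_big_seq => g gG; rewrite /v gG.
  rewrite -big_mkcond /= big_split /= -scaler_suml -mulr_suml -/L -/t.
  by rewrite [in LHS]Pz /x opprD addrACA addNr add0r scalerN.
have nv : forall g, g \in G -> g != g0 -> `|v g| = lam g * kap.
  move=> g gG gg0; rewrite /v gG gg0 /=.
  have lk : 0 <= lam g * kap by apply: mulr_ge0 => //; exact: normr_ge0.
  apply/eqP; rewrite -(@eqrXn2 _ 2) //.
  rewrite norm_orth; last by rewrite ipZl ipNl Fu6 // oppr0 mulr0.
  rewrite normrZ normrN Fu4 mulr1 (real_normK (num_real _)) -/(lam g).
  by apply/eqP; rewrite /kap /m; field.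
have sumn : \sum_(g <- G) `|v g| = L * kap.
  rewrite /L mulr_suml [RHS]big_mkcond /=; apply: eq_big_seq => h hG.
  by case: ifPn => hh0; [rewrite nv|rewrite /v hG /= (negbTE hh0) normr0].
have xS : Sig x.
  apply: (@one_atom g0 x g0G).
  by rewrite /x gprojN gprojD gprojZ gproj_id Fu1.
have xn : `|x| ^+ 2 = `|z0| ^+ 2 + 2 * t * `|c| + t ^+ 2.
  rewrite /x normrN -!ip_norm ipDl !ipDr !ipZl !ipZr (ip_sym u z0) Fu3 Fu5.
  ring.
have key : L * kap <= `|x|.
  have lk : 0 <= L * kap by exact: mulr_ge0.
  rewrite -(@ler_pXn2r _ 2) ?nnegrE ?normr_ge0 //= xn.
  have e1 : `|z0| ^+ 2 + 2 * t * `|c| + t ^+ 2 - (L * kap) ^+ 2 =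
      `|z0| ^+ 2 + L ^+ 2 * `|c| / (L + `|c|).
    have Lc : 0 < L + `|c| by rewrite ltr_wpDl.
    by rewrite /t /m /kap /k; field; rewrite (gt_eqF Lc) (gt_eqF cn).
  by rewrite -subr_ge0 e1 addr_ge0 ?sqr_ge0 // divr_ge0 ?mulr_ge0 ?sqr_ge0 ?addr_ge0 // ltW.
exists x => //; rewrite /= sum_v.
apply: le_trans (@atomic_sum Sig a0 _ G v a0S _) _.
  move=> g; rewrite /v; case: ifP => [/andP[gG gg0]|_]; last by rewrite eqxx.
  move=> v0; split; last exact: unitN.
  apply: (@two_atom g0 g _ g0G gG); first by rewrite eq_sym.
  have gg0' : g0 != g by rewrite eq_sym.
  have D := G_disj _ _ g0G gG gg0'.
  rewrite !gprojZ !gprojD !gprojZ !gprojN Fu1 (Fu2 g gG gg0) gproj_id gproj_disj //.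
  by rewrite oppr0 scaler0 addr0 add0r -scalerDr.
rewrite sumn; apply: le_trans _ (atomic_lb Sig x); by rewrite lee_fin.
Qed.
Lemma main_all :
  descent_set (atomic_norm Sig) Sig = cE Sig /\
  (forall (W : lmodType R) (M : {linear V -> W}),
     (exists z, z != 0 /\ M z = 0 /\ cE Sig z) ->
     exists x0, Sig x0 /\ ~ unique_minimizer (atomic_norm Sig) M x0).
Proof.
have E : descent_set (atomic_norm Sig) Sig = cE Sig.
  by apply/seteqP; split; [exact: descent_sub|exact: cE_sub].
split => // W M [z [z0 [Mz zE]]].
have : descent_set (atomic_norm Sig) Sig z by rewrite E.
move=> [x xS hz]; exists x; split => // um.
have := um (x + z); rewrite linearD Mz addr0 => /(_ erefl).
have xzx : x + z <> x.
  by move=> h; move/eqP: z0; apply; rewrite -[z](addKr x) h addNr.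
move=> /(_ xzx); rewrite ltNge; by move/negP; apply.
Qed.

End Main.

Theorem proposition7 (R : realType) (V : completeNormedModType R)
  (ip : V -> V -> R) (e : nat -> V)
  (ip_sym : forall x y, ip x y = ip y x)
  (ip_lin : forall (a : R) x y z, ip (a *: x + y) z = a * ip x z + ip y z)
  (ip_norm : forall x, ip x x = `|x| ^+ 2)
  (e_orthonormal : forall i j, ip (e i) (e j) = (i == j)%:R)
  (e_basis : forall x,
     (fun n => \sum_(i < n) ip x (e i) *: e i) @ \oo --> x)
  (G : {fset {fset nat}})
  (G_disj : forall g1 g2, g1 \in G -> g2 \in G -> g1 != g2 ->
                          [disjoint g1 & g2]%fset)
  (G_nontriv : exists2 g, g \in G & g != fset0)
  (K : nat) (HK : (2 <= K)%N) :
  let Sigma := Sigma_K ip e G K in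
  descent_set (atomic_norm Sigma) Sigma = cE Sigma /\
  (forall (W : lmodType R) (M : {linear V -> W}),
     (exists z, z != 0 /\ M z = 0 /\ cE Sigma z) ->
     exists x0, Sigma x0 /\ ~ unique_minimizer (atomic_norm Sigma) M x0).
Proof.
by move=> Sigma; apply: main_all.
Qed.
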